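(* For every $n\geq1$ and every $i\in\{1,\dots,N\}$, $$C^{(n+1)}_{ii}\cdot v=\lambda_i\, C^{(n)}_{ii}\cdot v-G_i\,C^{(n)}_{-i,i}\cdot v-\sum_{k\in I,\ |k|>i}C^{(n)}_{kk}\cdot v.$$
   Context: Let $N\geq1$, $I=\{-N,\dots,-1,1,\dots,N\}$, and for $k\in I$ put $\bar k=0$ if $k>0$, $\bar k=1$ if $k<0$. The Lie superalgebra $\mathfrak{q}(N)$ over $\mathbb{C}$ is spanned by elements $F_{ij}$ ($i,j\in I$) with $F_{-i,-j}=F_{ij}$ (realized as $F_{ij}=E_{ij}+E_{-i,-j}\in\mathfrak{gl}(N|N)$), $F_{ij}$ of parity $\bar\imath+\bar\jmath\bmod 2$, and supercommutator $$[F_{ij}, F_{kl}] = \delta_{kj} F_{il} - (-1)^{(\bar{\imath}+ \bar{\jmath})(\bar{k} + \bar{l})} \delta_{il} F_{kj} + \delta_{k,-j} F_{-i,l} - (-1)^{(\bar{\imath} + \bar{\jmath})(\bar{k} + \bar{l})} \delta_{-i,l} F_{k,-j}.$$ For $n\geq1$ define $C^{(n)}_{ij}\in U(\mathfrak{q}(N))$ by $$C^{(n)}_{ij} = \sum_{k_1,\ldots,k_{n-1}\in I}F_{ik_1} (-1)^{\bar{k}_1} F_{k_1k_2} (-1)^{\bar{k}_2} \cdots F_{k_{n-2}k_{n-1}} (-1)^{\bar{k}_{n-1}} F_{k_{n-1}j}$$ (so $C^{(1)}_{ij}=F_{ij}$). For $i>0$ let $G_i=F_{-i,i}$ $(=F_{i,-i})$.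 Let $V$ be a representation of $\mathfrak{q}(N)$ and $v\in V$ a vector such that $F_{ij}\cdot v=0$ whenever $|i|<|j|$, and $F_{ii}\cdot v=\lambda_i v$ for $i=1,\dots,N$, where $\lambda_1,\dots,\lambda_N\in\mathbb{C}$. *)

(* Defs.v *)
From HB Require Import structures.
From mathcomp Require Import all_boot all_order all_algebra.
Set Implicit Arguments. Unset Strict Implicit. Unset Printing Implicit Defensive.
Import Order.TTheory GRing.Theory Num.Theory.
Local Open Scope ring_scope.

(* The index set I = {-N,...,-1,1,...,N} is encoded as bool * 'I_N :
   (false, a) stands for the positive index a+1, (true, a) for -(a+1). *)
Definition idx (N : nat) := (bool * 'I_N)%type.
Definition ipos N (a : 'I_N) : idx N := (false, a).
Definition ineg N (a : 'I_N) : idx N := (true, a).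
Definition ibar N (k : idx N) : bool := k.1.
Definition iopp N (k : idx N) : idx N := (~~ k.1, k.2).
Definition iabs N (k : idx N) : nat := (k.2).+1.

Definition kdelta (R : nzRingType) N (k l : idx N) : R := (k == l)%:R.

Definition qsign (R : nzRingType) N (i j k l : idx N) : R :=
  (-1) ^+ ((ibar i (+) ibar j) && (ibar k (+) ibar l)).

(* A representation of q(N) on the module V: the images rho i j of the
   spanning elements F_{ij}, linear operators on V, with F_{-i,-j} = F_{ij}
   and the supercommutator relations of q(N). *)
Definition is_qrep (R : nzRingType) (V : lmodType R) N
    (rho : idx N -> idx N -> {linear V -> V}) : Prop :=
  (forall i j, rho (iopp i) (iopp j) =1 rho i j) /\
  (forall i j k l (w : V),
     rho i j (rho k l w) - qsign R i j k l *: rho k l (rho i j w) =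
       kdelta R k j *: rho i l w
     - qsign R i j k l *: (kdelta R i l *: rho k j w)
     + kdelta R k (iopp j) *: rho (iopp i) l w
     - qsign R i j k l *: (kdelta R (iopp i) l *: rho k (iopp j) w)).

(* Cpow n i j w = C^{(n+1)}_{ij} . w  (action of the element of U(q(N))) *)
Fixpoint Cpow (R : nzRingType) (V : lmodType R) N
    (rho : idx N -> idx N -> {linear V -> V}) (n : nat) (i j : idx N) (w : V)
    : V :=
  match n with
  | 0 => rho i j w
  | n'.+1 => \sum_(k : idx N)
               rho i k ((-1) ^+ ibar k *: Cpow rho n' k j w)
  end.

(* Cact rho n i j w = C^{(n)}_{ij} . w for n >= 1 (value 0 for n = 0, unused). *)
Definition Cact (R : nzRingType) (V : lmodType R) N
    (rho : idx N -> idx N -> {linear V -> V}) (n : nat) (i j : idx N) (w : V)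
    : V :=
  match n with
  | 0 => 0
  | n'.+1 => Cpow rho n' i j w
  end.

(* Main.v *)
Require Import Defs.
From HB Require Import structures.
From mathcomp Require Import all_boot all_order all_algebra ring.
Import Order.TTheory GRing.Theory Num.Theory.
Local Open Scope ring_scope.
Notation sg R k := ((-1 : R) ^+ ibar k).

Lemma qsign_mul (R : comNzRingType) N (a b c k d : idx N) :
  qsign R a b c k * qsign R a b k d = qsign R a b c d.
Proof.
case: a b c k d => [a1 a2] [b1 b2] [c1 c2] [k1 k2] [d1 d2].
rewrite /qsign /ibar /=.
by case: a1; case: b1; case: c1; case: k1; case: d1; rewrite /= ?(expr0, expr1, mulr1, mul1r, mulrNN).
Qed.

Lemma sign_swap1 (R : comNzRingType) N (a b c : idx N) :
  qsign R a b c a * sg R a = qsign R a b c b * sg R b.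
Proof.
case: a b c => [a1 a2] [b1 b2] [c1 c2].
rewrite /qsign /ibar /=.
by case: a1; case: b1; case: c1; rewrite /= ?(expr0, expr1, mulr1, mul1r, mulrNN).
Qed.

Lemma sign_swap2 (R : comNzRingType) N (a b c : idx N) :
  qsign R a b c (iopp a) * sg R (iopp a) = qsign R a b c (iopp b) * sg R (iopp b).
Proof.
case: a b c => [a1 a2] [b1 b2] [c1 c2].
rewrite /qsign /ibar /=.
by case: a1; case: b1; case: c1; rewrite /= ?(expr0, expr1, mulr1, mul1r, mulrNN).
Qed.

Lemma sg_sq (R : comNzRingType) N (k : idx N) : sg R k * sg R k = 1.
Proof. by rewrite -expr2 sqrr_sign. Qed.

Lemma sum_only (T : finType) (M : zmodType) (F : T -> M) j :
  (forall k, k != j -> F k = 0) -> \sum_k F k = F j.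
Proof.
move=> H; rewrite (bigD1 j) //= big1 ?addr0 // => k /H //.
Qed.

Lemma CpowZ (R : comNzRingType) (V : lmodType R) N (rho : idx N -> idx N -> {linear V -> V})
  n i j (c : R) w : Cpow rho n i j (c *: w) = c *: Cpow rho n i j w.
Proof.
elim: n i j => [|n IH] i j /=; first by rewrite linearZ.
rewrite scaler_sumr; apply: eq_bigr => k _.
by rewrite IH scalerA mulrC -scalerA linearZ.
Qed.

Lemma aux_lin (R : comNzRingType) (V : lmodType R) (f g : {linear V -> V}) (sck skd s e : R) (J B A : V) :
  f A = J + skd *: B -> s = sck * skd ->
  sck *: g (f (e *: A)) - s *: g (e *: B) = sck *: (e *: g J).
Proof.
move=> fA ->.
rewrite linearZ /= fA linearZ /= linearD /= linearZ /= !scalerDr.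
rewrite !linearZ /= !scalerA.
have -> : sck * skd * e = e * sck * skd by ring.
by rewrite scalerN addrK mulrC.
Qed.

Lemma comm_step (R : comNzRingType) (V : lmodType R) N (rho : idx N -> idx N -> {linear V -> V})
  (Hrep : is_qrep rho) n :
  (forall a b c d w, rho a b (Cpow rho n c d w) - qsign R a b c d *: Cpow rho n c d (rho a b w) =
     kdelta R c b *: Cpow rho n a d w
     - qsign R a b c d *: (kdelta R a d *: Cpow rho n c b w)
     + kdelta R c (iopp b) *: Cpow rho n (iopp a) d w
     - qsign R a b c d *: (kdelta R (iopp a) d *: Cpow rho n c (iopp b) w)) ->
  forall a b c k d w,
  rho a b (rho c k (sg R k *: Cpow rho n k d w)) - qsign R a b c d *: rho c k (sg R k *: Cpow rho n k d (rho a b w))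
  = (kdelta R c b *: rho a k (sg R k *: Cpow rho n k d w)
     - qsign R a b c k *: (kdelta R a k *: rho c b (sg R k *: Cpow rho n k d w))
     + kdelta R c (iopp b) *: rho (iopp a) k (sg R k *: Cpow rho n k d w)
     - qsign R a b c k *: (kdelta R (iopp a) k *: rho c (iopp b) (sg R k *: Cpow rho n k d w)))
    + qsign R a b c k *: (sg R k *: rho c k (
     kdelta R k b *: Cpow rho n a d w
     - qsign R a b k d *: (kdelta R a d *: Cpow rho n k b w)
     + kdelta R k (iopp b) *: Cpow rho n (iopp a) d w
     - qsign R a b k d *: (kdelta R (iopp a) d *: Cpow rho n k (iopp b) w))).
Proof.
move=> IH a b c k d w.
have H1 := (proj2 Hrep) a b c k (sg R k *: Cpow rho n k d w).
move/eqP: H1; rewrite subr_eq => /eqP ->.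
have H2 := IH a b k d w.
move/eqP: H2; rewrite subr_eq => /eqP H2.
rewrite -addrA; congr (_ + _).
apply: aux_lin; first exact: H2.
by rewrite qsign_mul.
Qed.

Lemma aux_J (R : comNzRingType) (V : lmodType R) (g : {linear V -> V}) (sck skd s e x1 x2 x3 x4 : R) (P Q P' Q' : V) :
  s = sck * skd ->
  sck *: (e *: g (x1 *: P - skd *: (x2 *: Q) + x3 *: P' - skd *: (x4 *: Q'))) =
  (sck * e * x1) *: g P - (s * x2) *: g (e *: Q) + (sck * e * x3) *: g P' - (s * x4) *: g (e *: Q').
Proof.
move=> ->.
rewrite !linearD /= !linearN /= !linearZ /= !scalerN !scalerA.
by congr (_ *: _ - _ *: _ + _ *: _ - _ *: _); ring.
Qed.

Ltac kill_delta :=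
  let k := fresh "k" in let hk := fresh "hk" in let hk' := fresh "hk'" in
  move=> k hk; have hk' := hk; rewrite eq_sym in hk';
  rewrite /kdelta ?(negbTE hk) ?(negbTE hk') ?(mulr0, mul0r, scale0r, scaler0).

Lemma kdd (R : comNzRingType) N (x : idx N) : kdelta R x x = 1.
Proof. by rewrite /kdelta eqxx. Qed.

Lemma reorg (M : zmodType) (x1 x2 x3 x4 y z : M) :
  x1 + - y + x3 + - z + (y + x2 + z + x4) = x1 + x2 + x3 + x4.
Proof.
rewrite !addrA [_ - z + y]addrAC [_ - y + x3]addrAC subrK.
rewrite [_ - z + x2]addrAC subrK.
by rewrite [_ + x3 + x2]addrAC.
Qed.

Lemma comm_all (R : comNzRingType) (V : lmodType R) N (rho : idx N -> idx N -> {linear V -> V})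
  (Hrep : is_qrep rho) n :
  forall a b c d w, rho a b (Cpow rho n c d w) - qsign R a b c d *: Cpow rho n c d (rho a b w) =
     kdelta R c b *: Cpow rho n a d w
     - qsign R a b c d *: (kdelta R a d *: Cpow rho n c b w)
     + kdelta R c (iopp b) *: Cpow rho n (iopp a) d w
     - qsign R a b c d *: (kdelta R (iopp a) d *: Cpow rho n c (iopp b) w).
Proof.
elim: n => [|n IH]; first exact: (proj2 Hrep).
move=> a b c d w.
rewrite [Cpow rho n.+1 c d w]/= [Cpow rho n.+1 c d (rho a b w)]/=.
rewrite linear_sum scaler_sumr -sumrB.
under eq_bigr => k _ do rewrite (@comm_step _ _ _ _ Hrep _ IH) (@aux_J _ _ _ _ _ (qsign R a b c d) _ _ _ _ _ _ _ _ _ (esym (qsign_mul _ _ _ _ _ _ _))).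
rewrite !(big_split, sumrB) /=.
rewrite !sumrN.
have E2 : \sum_i (qsign R a b c i *: (kdelta R a i *: rho c b (sg R i *: Cpow rho n i d w)))
   = qsign R a b c a *: rho c b (sg R a *: Cpow rho n a d w).
  by rewrite (@sum_only _ _ _ a) ?kdd ?scale1r //; kill_delta.
have E4 : \sum_i (qsign R a b c i *: (kdelta R (iopp a) i *: rho c (iopp b) (sg R i *: Cpow rho n i d w)))
   = qsign R a b c (iopp a) *: rho c (iopp b) (sg R (iopp a) *: Cpow rho n (iopp a) d w).
  by rewrite (@sum_only _ _ _ (iopp a)) ?kdd ?scale1r //; kill_delta.
have E5 : \sum_i ((qsign R a b c i * sg R i * kdelta R i b) *: rho c i (Cpow rho n a d w))
   = (qsign R a b c b * sg R b) *: rho c b (Cpow rho n a d w).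
  by rewrite (@sum_only _ _ _ b) ?kdd ?mulr1 //; kill_delta.
have E7 : \sum_i ((qsign R a b c i * sg R i * kdelta R i (iopp b)) *: rho c i (Cpow rho n (iopp a) d w))
   = (qsign R a b c (iopp b) * sg R (iopp b)) *: rho c (iopp b) (Cpow rho n (iopp a) d w).
  by rewrite (@sum_only _ _ _ (iopp b)) ?kdd ?mulr1 //; kill_delta.
rewrite E2 E4 E5 E7 -!scaler_sumr.
rewrite !linearZ /= !scalerA sign_swap1 sign_swap2 !scalerN.
exact: reorg.
Qed.
Arguments comm_all {R V N rho} Hrep n a b c d w.

Lemma Cpow0 (R : comNzRingType) (V : lmodType R) N (rho : idx N -> idx N -> {linear V -> V}) n i j :
  Cpow rho n i j 0 = 0.
Proof. by have := @CpowZ _ _ _ rho n i j 0 0; rewrite !scale0r. Qed.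

Lemma kdelta0 (R : comNzRingType) N (x y : idx N) : x != y -> kdelta R x y = 0.
Proof. by move=> h; rewrite /kdelta (negbTE h). Qed.
Arguments kdelta0 {R N x y}.

Lemma neq_abs N (x y : idx N) : iabs x != iabs y -> x != y.
Proof. by apply: contra => /eqP ->. Qed.
Arguments neq_abs {N} x y.

Lemma neq_opp N (x : idx N) : x != iopp x.
Proof. by case: x => [[] m]; rewrite /iopp xpair_eqE. Qed.
Arguments neq_opp {N} x.

Lemma vanish (R : comNzRingType) (V : lmodType R) N (rho : idx N -> idx N -> {linear V -> V})
  (Hrep : is_qrep rho) (v : V)
  (Hup : forall i j : idx N, (iabs i < iabs j)%N -> rho i j v = 0) n :
  forall k l, (iabs k < iabs l)%N -> Cpow rho n k l v = 0.
Proof.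
elim: n => [|n IH] k l hkl /=; first exact: Hup.
apply: big1 => m _.
case: (ltnP (iabs m) (iabs l)) => hm.
  by rewrite IH // scaler0 linear0.
have hkm : (iabs k < iabs m)%N by apply: leq_trans hm.
have C := comm_all Hrep n k m m l v.
rewrite (Hup _ _ hkm) Cpow0 scaler0 subr0 in C.
rewrite linearZ /= C IH // kdd scale1r.
rewrite (kdelta0 (neq_abs k l _)); last by rewrite neq_ltn hkl.
rewrite (kdelta0 (neq_opp m)).
rewrite (kdelta0 (neq_abs (iopp k) _ _)); last by rewrite neq_ltn hkl.
by rewrite !scale0r !scaler0 !subr0 addr0 scaler0.
Qed.
Arguments vanish {R V N rho} Hrep {v} Hup n k l.

Lemma qsign_i (R : comNzRingType) N (a : 'I_N) (k : idx N) :
  qsign R (ipos a) k k (ipos a) = sg R k.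
Proof. by case: k => [[] m]; rewrite /qsign /ibar /= ?expr1 ?expr0. Qed.

Lemma abs_eq N (a : 'I_N) (k : idx N) : iabs k = iabs (ipos a) -> (k == ipos a) || (k == ineg a).
Proof.
case: k => b m; rewrite /iabs /= => -[] hm.
have -> : m = a by apply: val_inj.
by case: b; rewrite /ipos /ineg eqxx ?orbT.
Qed.
Arguments abs_eq {N a k}.

Theorem mainTheorem5 (R : numClosedFieldType) (V : lmodType R) (N : nat)
    (rho : idx N -> idx N -> {linear V -> V})
    (Hrep : is_qrep rho)
    (lambda : 'I_N -> R) (v : V)
    (Hup : forall i j : idx N, (iabs i < iabs j)%N -> rho i j v = 0)
    (Hwt : forall a : 'I_N, rho (ipos a) (ipos a) v = lambda a *: v) :
  forall (n : nat) (a : 'I_N), (1 <= n)%N ->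
    Cact rho n.+1 (ipos a) (ipos a) v =
      lambda a *: Cact rho n (ipos a) (ipos a) v
      - rho (ineg a) (ipos a) (Cact rho n (ineg a) (ipos a) v)
      - \sum_(k : idx N | (iabs (ipos a) < iabs k)%N) Cact rho n k k v.
Proof.
case=> [|n] a // _.
rewrite [Cact _ _ _ _ _]/= [Cact _ n.+1 _ _ _]/=.
set i := ipos a.
have hneg : ineg a != i by [].
rewrite (bigD1 i) //= (bigD1 (ineg a)) //=.
have Ti : rho i i ((-1) ^+ ibar i *: Cpow rho n i i v) = lambda a *: Cpow rho n i i v.
  rewrite expr0 scale1r.
  have C := comm_all Hrep n i i i i v.
  have qi : qsign R i i i i = 1 by rewrite /qsign /= expr0.
  rewrite qi !kdd !scale1r subrr (kdelta0 (neq_opp i)) in C.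
  rewrite (kdelta0 (negbT (_ : iopp i == i = false))) // in C.
  move/eqP: C; rewrite !scale0r ?scaler0 ?subr0 ?add0r subr_eq0 => /eqP ->.
  by rewrite (Hwt a) CpowZ.
have Tn : rho i (ineg a) ((-1) ^+ ibar (ineg a) *: Cpow rho n (ineg a) i v)
    = - rho (ineg a) i (Cpow rho n (ineg a) i v).
  have H : rho (ipos a) (ineg a) (Cpow rho n (ineg a) i v) = rho (ineg a) (ipos a) (Cpow rho n (ineg a) i v)
    := (proj1 Hrep) (ineg a) (ipos a) _.
  by rewrite expr1 scaleN1r linearN /= H.
rewrite Ti Tn.
have S : \sum_(k | (k != i) && (k != ineg a)) rho i k ((-1) ^+ ibar k *: Cpow rho n k i v)
   = \sum_(k : idx N | (iabs i < iabs k)%N) (sg R k *: Cpow rho n i i v - Cpow rho n k k v).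
  rewrite big_mkcond [RHS]big_mkcond; apply: eq_bigr => k _.
  case: (ltngtP (iabs i) (iabs k)) => hk.
  - have -> : (k != i) && (k != ineg a).
      by rewrite !(neq_abs k) // eq_sym neq_ltn hk ?orbT.
    have C := comm_all Hrep n i k k i v.
    rewrite (Hup _ _ hk) Cpow0 scaler0 subr0 kdd scale1r kdd scale1r qsign_i in C.
    rewrite (kdelta0 (neq_opp k)) (kdelta0 (negbT (_ : iopp i == i = false))) // in C.
    rewrite !scale0r !scaler0 !subr0 addr0 in C.
    by rewrite linearZ /= C scalerBr scalerA sg_sq scale1r.
  - rewrite (vanish Hrep Hup) // scaler0 linear0.
    by case: ifP.
  - have := abs_eq (esym hk); rewrite -/i; case/orP => /eqP ->.
      by rewrite eqxx.
    by rewrite eqxx andbF.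
rewrite S sumrB -scaler_suml.
have S0 : \sum_(k : idx N | (iabs i < iabs k)%N) (sg R k) = 0.
  transitivity (\sum_(x : bool) \sum_(y : 'I_N)
      (if (iabs i < y.+1)%N then (-1 : R) ^+ x else 0)).
    by rewrite pair_bigA big_mkcond /=; apply: eq_bigr => -[x y] _.
  rewrite big_bool /= -big_split /= big1 // => y _.
  by case: ifP; rewrite ?addr0 // expr1 expr0 addNr.
by rewrite S0 scale0r add0r addrA.
Qed.
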